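(* A Möbius transformation of $\mathcal A_2^{(0,1)}\cup\{\infty\}$ fixes both $-1$ and $1$ if and only if its Vahlen matrices $\pm A$ are of the form $$A=\begin{pmatrix}\cosh x&\sinh x\\ \sinh x&\cosh x\end{pmatrix}\quad\text{for some }x\in\mathcal A_2.$$
   Context: $\mathcal A_2$ is the real associative algebra generated by $e_1,e_2$ with $e_1^2=e_2^2=-1$, $e_1e_2=-e_2e_1$ (basis $1,e_1,e_2,e_1e_2$). For $a=a_0+a_1e_1+a_2e_2+a_{12}e_1e_2$ let $a^*=a_0+a_1e_1+a_2e_2-a_{12}e_1e_2$ (the reverse involution, $(ab)^*=b^*a^*$). $\mathcal A_2^{(0,1)}=\mathbb R+\mathbb Re_1+\mathbb Re_2$. $\exp x=\sum_{m\ge0}x^m/m!$, $\cosh x=\tfrac12(\exp x+\exp(-x^* ))$, $\sinh x=\tfrac12(\exp x-\exp(-x^* ))$. A Vahlen matrix is $\begin{pmatrix}a&b\\c&d\end{pmatrix}$ with $a,b,c,d\in\mathcal A_2$, $ad^*-bc^*=1$ and $ab^*,cd^*\in\mathcal A_2^{(0,1)}$; it acts on $\mathcal A_2^{(0,1)}\cup\{\infty\}$ by $x\mapsto(ax+b)(cx+d)^{-1}$, $\infty\mapsto ac^{-1}$. The Möbius transformations (conformal orientation-preserving automorphisms) of $\mathcal A_2^{(0,1)}\cup\{\infty\}$ are exactly these maps, each given by exactly two Vahlen matrices $\pm A$. *)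

(* Defs.v *)
From Stdlib Require Import Reals Factorial.
From Coquelicot Require Import Coquelicot.
Open Scope R_scope.

(** The algebra A_2 = R<e1,e2 | e1^2 = e2^2 = -1, e1 e2 = - e2 e1>,
    elements a0 + a1 e1 + a2 e2 + a12 e1e2 stored by coordinates. *)
Record A2 := mkA2 { c0 : R; c1 : R; c2 : R; c12 : R }.

Definition a2zero : A2 := mkA2 0 0 0 0.
Definition a2one  : A2 := mkA2 1 0 0 0.
Definition a2real (r : R) : A2 := mkA2 r 0 0 0.
Definition a2add (a b : A2) : A2 :=
  mkA2 (c0 a + c0 b) (c1 a + c1 b) (c2 a + c2 b) (c12 a + c12 b).
Definition a2opp (a : A2) : A2 := mkA2 (- c0 a) (- c1 a) (- c2 a) (- c12 a).
Definition a2sub (a b : A2) : A2 := a2add a (a2opp b).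
Definition a2scale (r : R) (a : A2) : A2 :=
  mkA2 (r * c0 a) (r * c1 a) (r * c2 a) (r * c12 a).

(** Product, from the multiplication table of the basis 1, e1, e2, e12:
    e1e1 = e2e2 = e12e12 = -1, e1e2 = e12, e2e1 = -e12,
    e1e12 = -e2, e12e1 = e2, e2e12 = e1, e12e2 = -e1. *)
Definition a2mul (a b : A2) : A2 :=
  mkA2 (c0 a * c0 b - c1 a * c1 b - c2 a * c2 b - c12 a * c12 b)
       (c0 a * c1 b + c1 a * c0 b + c2 a * c12 b - c12 a * c2 b)
       (c0 a * c2 b - c1 a * c12 b + c2 a * c0 b + c12 a * c1 b)
       (c0 a * c12 b + c1 a * c2 b - c2 a * c1 b + c12 a * c0 b).

Definition a2star (a : A2) : A2 := mkA2 (c0 a) (c1 a) (c2 a) (- c12 a).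

Definition a2normsq (a : A2) : R :=
  c0 a * c0 a + c1 a * c1 a + c2 a * c2 a + c12 a * c12 a.
Definition a2inv (a : A2) : A2 :=
  a2scale (/ a2normsq a) (mkA2 (c0 a) (- c1 a) (- c2 a) (- c12 a)).

Definition paravector (a : A2) : Prop := c12 a = 0.

Fixpoint a2pow (x : A2) (m : nat) : A2 :=
  match m with O => a2one | S k => a2mul (a2pow x k) x end.
Fixpoint a2exp_partial (x : A2) (n : nat) : A2 :=
  match n with
  | O => a2zero
  | S k => a2add (a2exp_partial x k) (a2scale (/ INR (Factorial.fact k)) (a2pow x k))
  end.
Definition a2exp (x : A2) : A2 :=
  mkA2 (real (Lim_seq (fun n => c0 (a2exp_partial x n))))
       (real (Lim_seq (fun n => c1 (a2exp_partial x n))))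
       (real (Lim_seq (fun n => c2 (a2exp_partial x n))))
       (real (Lim_seq (fun n => c12 (a2exp_partial x n)))).

Definition a2cosh (x : A2) : A2 :=
  a2scale (/ 2) (a2add (a2exp x) (a2exp (a2opp (a2star x)))).
Definition a2sinh (x : A2) : A2 :=
  a2scale (/ 2) (a2sub (a2exp x) (a2exp (a2opp (a2star x)))).

Record Mat2 := mkMat2 { ma : A2; mb : A2; mc : A2; md : A2 }.
Definition mat_opp (A : Mat2) : Mat2 :=
  mkMat2 (a2opp (ma A)) (a2opp (mb A)) (a2opp (mc A)) (a2opp (md A)).

Definition vahlen (A : Mat2) : Prop :=
  a2sub (a2mul (ma A) (a2star (md A))) (a2mul (mb A) (a2star (mc A))) = a2one /\
  paravector (a2mul (ma A) (a2star (mb A))) /\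
  paravector (a2mul (mc A) (a2star (md A))).

(** Points of A_2^{(0,1)} ∪ {∞}: [Some x] is the finite point x, [None] is ∞. *)
Definition mobius (A : Mat2) (p : option A2) : option A2 :=
  match p with
  | Some x =>
      let den := a2add (a2mul (mc A) x) (md A) in
      if Req_EM_T (a2normsq den) 0 then None
      else Some (a2mul (a2add (a2mul (ma A) x) (mb A)) (a2inv den))
  | None =>
      if Req_EM_T (a2normsq (mc A)) 0 then None
      else Some (a2mul (ma A) (a2inv (mc A)))
  end.

Definition fixes (A : Mat2) (x : A2) : Prop := mobius A (Some x) = Some x.

Definition cosh_sinh_mat (x : A2) : Mat2 :=
  mkMat2 (a2cosh x) (a2sinh x) (a2sinh x) (a2cosh x).

(* Main.v *)
Require Import Defs.
From Stdlib Require Import Reals Lra Lia Psatz Factorial.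
From Coquelicot Require Import Coquelicot.
Import Defs.
Open Scope R_scope.

Lemma A2_ext : forall a b, c0 a = c0 b -> c1 a = c1 b -> c2 a = c2 b -> c12 a = c12 b -> a = b.
Proof. intros [] []; simpl; intros; subst; reflexivity. Qed.

Ltac a2u := unfold a2inv, a2sub, a2mul, a2add, a2opp, a2sub, a2scale, a2star, a2real, a2one, a2zero, a2inv, a2normsq in *; cbn [c0 c1 c2 c12] in *.
Ltac a2ring := intros; apply A2_ext; a2u; ring.

Definition a2sum (f : nat -> A2) n := mkA2 (sum_f_R0 (fun j => c0 (f j)) n)
  (sum_f_R0 (fun j => c1 (f j)) n) (sum_f_R0 (fun j => c2 (f j)) n) (sum_f_R0 (fun j => c12 (f j)) n).

Lemma a2mul_addl p q y : a2mul (a2add p q) y = a2add (a2mul p y) (a2mul q y). Proof. a2ring. Qed.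
Lemma a2mul_scalel r p y : a2mul (a2scale r p) y = a2scale r (a2mul p y). Proof. a2ring. Qed.

Lemma a2sum_S f n : a2sum f (S n) = a2add (a2sum f n) (f (S n)).
Proof. apply A2_ext; reflexivity. Qed.

Lemma a2mul_sum f y n : a2mul (a2sum f n) y = a2sum (fun j => a2mul (f j) y) n.
Proof.
  induction n.
  - apply A2_ext; simpl; reflexivity.
  - rewrite !a2sum_S, a2mul_addl, IHn; reflexivity.
Qed.

Definition fa (t:R) j := t^j / INR (fact j).
Definition Bw w m := a2scale (/ INR (fact m)) (a2pow w m).

Lemma cauchy_step (al be : nat -> R) (t : R) k
  (Ha: forall j, al (S j) * INR (S j) = t * al j) :
  sum_f_R0 (fun j => al j * (t * be (k-j)%nat + INR (S (k-j)) * be (S (k-j)))) k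
  = INR (S k) * sum_f_R0 (fun j => al j * be (S k - j)%nat) (S k).
Proof.
  rewrite scal_sum.
  transitivity (sum_f_R0 (fun j => INR j * al j * be (S k - j)%nat) (S k)
     + sum_f_R0 (fun j => INR (S k - j) * al j * be (S k - j)%nat) (S k)).
  2:{ rewrite <- sum_plus. apply sum_eq. intros i Hi.
      assert (INR i + INR (S k - i) = INR (S k)) by (rewrite <- plus_INR; f_equal; lia).
      rewrite <- H. ring. }
  rewrite (decomp_sum (fun j => INR j * al j * be (S k - j)%nat) (S k)) by lia.
  rewrite (tech5 (fun j => INR (S k - j) * al j * be (S k - j)%nat) k). simpl pred.
  replace (S k - S k)%nat with 0%nat by lia.
  replace (INR 0) with 0 by reflexivity.
  transitivity (sum_f_R0 (fun i => INR (S i) * al (S i) * be (S k - S i)%nat) k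
      + sum_f_R0 (fun j => INR (S k - j) * al j * be (S k - j)%nat) k).
  2: ring.
  rewrite <- sum_plus. apply sum_eq. intros i Hi.
  replace (S k - S i)%nat with (k - i)%nat by lia.
  replace (S k - i)%nat with (S (k - i)) by lia.
  specialize (Ha i). rewrite Rmult_comm in Ha. rewrite Ha. ring.
Qed.

Lemma Bw_step w m : a2mul (Bw w m) w = a2scale (INR (S m)) (Bw w (S m)).
Proof.
  unfold Bw. simpl a2pow. rewrite a2mul_scalel.
  change (fact (S m)) with (S m * fact m)%nat.
  apply A2_ext; a2u; rewrite mult_INR; field; split; apply not_0_INR; try lia;
  apply fact_neq_0.
Qed.

Lemma binom t w k : a2scale (/ INR (fact k)) (a2pow (a2add (a2real t) w) k)
  = a2sum (fun j => a2scale (fa t j) (Bw w (k - j))) k.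
Proof.
  induction k.
  - apply A2_ext; unfold fa, Bw; simpl; a2u; field.
  - set (x := a2add (a2real t) w) in *.
    transitivity (a2scale (/ INR (S k)) (a2mul (a2scale (/ INR (fact k)) (a2pow x k)) x)).
    { simpl a2pow. change (fact (S k)) with (S k * fact k)%nat. apply A2_ext; a2u; rewrite mult_INR; field; split; apply not_0_INR; try lia;
      apply fact_neq_0. }
    rewrite IHk, a2mul_sum.
    assert (Hb : forall j, a2mul (a2scale (fa t j) (Bw w (k - j))) x =
       a2scale (fa t j) (a2add (a2scale t (Bw w (k-j))) (a2scale (INR (S (k-j))) (Bw w (S (k-j)))))).
    { intros j. rewrite a2mul_scalel. f_equal. rewrite <- Bw_step. unfold x. a2ring. }
    assert (Ha : forall j, fa t (S j) * INR (S j) = t * fa t j).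
    { intros j. unfold fa. change (fact (S j)) with (S j * fact j)%nat. simpl pow. rewrite mult_INR. field. split; apply not_0_INR; try lia; apply fact_neq_0. }
    assert (Hc : forall be : nat -> R,
      / INR (S k) * sum_f_R0 (fun j => fa t j * (t * be (k-j)%nat + INR (S (k-j)) * be (S (k-j)))) k
      = sum_f_R0 (fun j => fa t j * be (S k - j)%nat) (S k)).
    { intros be. rewrite (cauchy_step _ _ t k Ha). field. apply not_0_INR; lia. }
    apply A2_ext; unfold a2scale at 1, a2sum; cbn [c0 c1 c2 c12];
    [ etransitivity; [| exact (Hc (fun m => c0 (Bw w m)))]
    | etransitivity; [| exact (Hc (fun m => c1 (Bw w m)))]
    | etransitivity; [| exact (Hc (fun m => c2 (Bw w m)))]
    | etransitivity; [| exact (Hc (fun m => c12 (Bw w m)))] ];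
    f_equal; apply sum_eq; intros i Hi; rewrite Hb; unfold a2scale, a2add; cbn [c0 c1 c2 c12]; ring.
Qed.
Fixpoint csn (m:nat) : R*R := match m with O => (1,0) | S k => (- snd (csn k), fst (csn k)) end.
Definition cs m := fst (csn m).
Definition sn m := snd (csn m).

Lemma pow_w th n1 n2 n3 (H : n1*n1+n2*n2+n3*n3 = 1) m :
  a2pow (mkA2 0 (th*n1) (th*n2) (th*n3)) m =
  mkA2 (th^m * cs m) (th^m * sn m * n1) (th^m * sn m * n2) (th^m * sn m * n3).
Proof.
  induction m.
  - apply A2_ext; simpl; unfold cs, sn; simpl; ring.
  - simpl a2pow. rewrite IHm. unfold cs, sn. simpl csn. simpl pow.
    apply A2_ext; a2u; cbn [fst snd];
    [ match goal with |- _ = ?r => rewrite <- (Rmult_1_r r), <- H; ring end | ring | ring | ring].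
Qed.

Lemma csn_parity k : cs (2*k) = (-1)^k /\ sn (2*k) = 0 /\ cs (2*k+1) = 0 /\ sn (2*k+1) = (-1)^k.
Proof.
  induction k.
  - unfold cs, sn; simpl; repeat split; ring.
  - replace (2 * S k + 1)%nat with (S (S (2*k+1))) by lia.
    replace (2 * S k)%nat with (S (S (2*k))) by lia.
    unfold cs, sn in *. cbn [csn fst snd]. destruct IHk as [A [B [C D]]].
    rewrite A, B, C, D. simpl pow. repeat split; ring.
Qed.

Lemma cs_bound m : Rabs (cs m) <= 1 /\ Rabs (sn m) <= 1.
Proof.
  induction m.
  - unfold cs, sn; simpl. rewrite Rabs_R1, Rabs_R0. lra.
  - unfold cs, sn in *; simpl csn; cbn [fst snd]. rewrite Rabs_Ropp. tauto.
Qed.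

Lemma is_series_zero : is_series (fun _ : nat => 0) 0.
Proof.
  assert (H := is_series_scal 0 _ _ (proj1 (is_pseries_R _ _ _) (is_exp_Reals 1))).
  eapply is_series_ext in H. 2: { intros n. cbv beta. match goal with |- ?a = ?b => change (@eq R a b) end. apply Rmult_0_l. }
  change (scal 0 (exp 1)) with (0 * exp 1) in H. rewrite Rmult_0_l in H. exact H.
Qed.

Lemma series_cos th : is_series (fun m => / INR (fact m) * (th^m * cs m)) (cos th).
Proof.
  assert (He : is_pseries (fun n => cs (2*n) / INR (fact (2*n))) (th^2) (cos th)).
  { apply is_pseries_R.
    unfold cos. destruct (exist_cos (Rsqr th)) as [l Hl]. unfold cos_in in Hl.
    apply is_series_Reals in Hl. rewrite <- Rsqr_pow2.
    eapply is_series_ext; [|exact Hl]. intros n. cbv beta. match goal with |- ?a = ?b => change (@eq R a b) end.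
    destruct (csn_parity n) as [A _]. rewrite A. unfold cos_n. reflexivity; try apply INR_fact_neq_0. }
  assert (Ho : is_pseries (fun n => cs (2*n+1) / INR (fact (2*n+1))) (th^2) 0).
  { apply is_pseries_R. eapply is_series_ext; [|exact is_series_zero].
    intros n. match goal with |- ?a = ?b => change (@eq R a b) end. destruct (csn_parity n) as [_ [_ [C _]]]. rewrite C. field; try apply INR_fact_neq_0. }
  assert (H := is_pseries_odd_even (fun m => cs m / INR (fact m)) _ _ _ He Ho).
  apply is_pseries_R in H. rewrite Rmult_0_r, Rplus_0_r in H.
  eapply is_series_ext; [|exact H]. intros n. cbv beta. match goal with |- ?a = ?b => change (@eq R a b) end. field; try apply INR_fact_neq_0.
Qed.

Lemma series_sin th : is_series (fun m => / INR (fact m) * (th^m * sn m)) (sin th).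
Proof.
  assert (He : is_pseries (fun n => sn (2*n) / INR (fact (2*n))) (th^2) 0).
  { apply is_pseries_R. eapply is_series_ext; [|exact is_series_zero].
    intros n. match goal with |- ?a = ?b => change (@eq R a b) end. destruct (csn_parity n) as [_ [B _]]. rewrite B. field; try apply INR_fact_neq_0. }
  unfold sin. destruct (exist_sin (Rsqr th)) as [l Hl]. unfold sin_in in Hl.
  assert (Ho : is_pseries (fun n => sn (2*n+1) / INR (fact (2*n+1))) (th^2) l).
  { apply is_pseries_R.
    apply is_series_Reals in Hl. rewrite <- Rsqr_pow2.
    eapply is_series_ext; [|exact Hl]. intros n. cbv beta. match goal with |- ?a = ?b => change (@eq R a b) end.
    destruct (csn_parity n) as [_ [_ [_ D]]]. rewrite D. unfold sin_n. field; try apply INR_fact_neq_0. }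
  assert (H := is_pseries_odd_even (fun m => sn m / INR (fact m)) _ _ _ He Ho).
  apply is_pseries_R in H. rewrite Rplus_0_l in H.
  eapply is_series_ext; [|exact H]. intros n. cbv beta. match goal with |- ?a = ?b => change (@eq R a b) end. field; try apply INR_fact_neq_0.
Qed.

Lemma series_exp t : is_series (fun j => fa t j) (exp t).
Proof.
  assert (H := proj1 (is_pseries_R _ _ _) (is_exp_Reals t)).
  eapply is_series_ext; [|exact H]. intros n. unfold fa. simpl. field; try apply INR_fact_neq_0.
Qed.

Lemma abs_exp t : ex_series (fun j => Rabs (fa t j)).
Proof.
  exists (exp (Rabs t)). eapply is_series_ext; [|exact (series_exp (Rabs t))].
  intros n. unfold fa. rewrite Rabs_div by apply INR_fact_neq_0. rewrite <- RPow_abs.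
  rewrite (Rabs_right (INR _)); [reflexivity|]. apply Rle_ge, pos_INR.
Qed.

Lemma abs_bound (b : nat -> R) th (Hb : forall m, Rabs (b m) <= fa (Rabs th) m) :
  ex_series (fun m => Rabs (b m)).
Proof.
  apply (@ex_series_le R_AbsRing R_CompleteNormedModule) with (fun m => fa (Rabs th) m).
  - intros n. change (norm (Rabs (b n))) with (Rabs (Rabs (b n))). rewrite Rabs_Rabsolu. apply Hb.
  - exists (exp (Rabs th)). apply series_exp.
Qed.

Lemma part_sum x N : a2exp_partial x (S N) = a2sum (fun k => a2scale (/ INR (fact k)) (a2pow x k)) N.
Proof.
  induction N.
  - apply A2_ext; simpl; ring.
  - change (a2exp_partial x (S (S N))) with
      (a2add (a2exp_partial x (S N)) (a2scale (/ INR (fact (S N))) (a2pow x (S N)))).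
    rewrite IHN, a2sum_S. reflexivity.
Qed.

Lemma lim_coord (u s : nat -> R) l : (forall N, u (S N) = sum_f_R0 s N) -> is_series s l ->
  real (Lim_seq u) = l.
Proof.
  intros Hu Hs. rewrite <- Lim_seq_incr_1.
  rewrite (Lim_seq_ext _ (sum_n s)).
  - unfold is_series in Hs. rewrite (is_lim_seq_unique _ l); [reflexivity|]. exact Hs.
  - intros n. rewrite Hu, sum_n_Reals. reflexivity.
Qed.

Lemma bnd th m c (Hc : Rabs c <= 1) : Rabs (/ INR (fact m) * (th^m * c)) <= fa (Rabs th) m.
Proof.
  unfold fa. assert (F : 0 < INR (fact m)) by (apply INR_fact_lt_0).
  rewrite !Rabs_mult, Rabs_inv, (Rabs_right (INR _)) by lra. rewrite <- RPow_abs.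
  assert (0 <= Rabs th ^ m) by (apply pow_le, Rabs_pos).
  assert (0 < / INR (fact m)) by (apply Rinv_0_lt_compat; lra).
  unfold Rdiv. rewrite Rmult_comm. apply Rmult_le_compat_r; [lra|].
  rewrite <- (Rmult_1_r (Rabs th ^ m)) at 2. apply Rmult_le_compat_l; lra.
Qed.

Lemma abs_le1 a b : Rabs a <= 1 -> Rabs b <= 1 -> Rabs (a * b) <= 1.
Proof. intros. rewrite Rabs_mult. assert (0 <= Rabs a) by apply Rabs_pos.
  assert (0 <= Rabs b) by apply Rabs_pos. nra. Qed.

Lemma exp_formula t th n1 n2 n3 (H: n1*n1+n2*n2+n3*n3=1) :
  a2exp (mkA2 t (th*n1) (th*n2) (th*n3)) =
  mkA2 (exp t * cos th) (exp t * (sin th * n1)) (exp t * (sin th * n2)) (exp t * (sin th * n3)).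
Proof.
  set (w := mkA2 0 (th*n1) (th*n2) (th*n3)).
  replace (mkA2 t (th*n1) (th*n2) (th*n3)) with (a2add (a2real t) w)
    by (apply A2_ext; unfold w; a2u; ring).
  assert (Hn : forall c, c*c <= 1 -> Rabs c <= 1).
  { intros c Hc. apply Rabs_le. split; nra. }
  assert (H1 : Rabs n1 <= 1) by (apply Hn; nra).
  assert (H2 : Rabs n2 <= 1) by (apply Hn; nra).
  assert (H3 : Rabs n3 <= 1) by (apply Hn; nra).
  assert (Hpw := pow_w th n1 n2 n3 H).
  assert (Hsum : forall (g : A2 -> R), (forall p q, g (a2add p q) = g p + g q) ->
     (forall r p, g (a2scale r p) = r * g p) ->
     forall N, g (a2exp_partial (a2add (a2real t) w) (S N)) =
       sum_f_R0 (fun k => sum_f_R0 (fun j => fa t j * g (Bw w (k - j))) k) N).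
  { intros g gadd gscal N. rewrite part_sum.
    assert (gsum : forall f n, g (a2sum f n) = sum_f_R0 (fun j => g (f j)) n).
    { intros f n; induction n.
      - simpl. f_equal. apply A2_ext; reflexivity.
      - rewrite a2sum_S, gadd, IHn. reflexivity. }
    rewrite gsum. apply sum_eq. intros k _. rewrite binom, gsum. apply sum_eq.
    intros j _. apply gscal. }
  apply A2_ext; unfold a2exp; cbn [c0 c1 c2 c12].
  - apply (lim_coord _ _ _ (Hsum c0 ltac:(intros; reflexivity) ltac:(intros; reflexivity))).
    apply (is_series_mult (fa t) (fun m => c0 (Bw w m))); [apply series_exp | | apply abs_exp | ].
    + eapply is_series_ext; [|apply (series_cos th)]. intros m. unfold Bw, w.
      rewrite Hpw. reflexivity.
    + apply abs_bound with th. intros m. unfold Bw, w. rewrite Hpw. apply bnd.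
      apply cs_bound.
  - apply (lim_coord _ _ _ (Hsum c1 ltac:(intros; reflexivity) ltac:(intros; reflexivity))).
    apply (is_series_mult (fa t) (fun m => c1 (Bw w m))); [apply series_exp | | apply abs_exp | ].
    + eapply is_series_ext; [|apply (is_series_scal_r n1 _ _ (series_sin th))]. intros m. unfold Bw, w.
      rewrite Hpw. cbn [c1 a2scale]. match goal with |- ?a = ?b => change (@eq R a b) end. ring.
    + apply abs_bound with th. intros m. unfold Bw, w. rewrite Hpw. cbn [c1 a2scale].
      rewrite Rmult_assoc. apply bnd. apply abs_le1; [apply cs_bound|auto].
  - apply (lim_coord _ _ _ (Hsum c2 ltac:(intros; reflexivity) ltac:(intros; reflexivity))).
    apply (is_series_mult (fa t) (fun m => c2 (Bw w m))); [apply series_exp | | apply abs_exp | ].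
    + eapply is_series_ext; [|apply (is_series_scal_r n2 _ _ (series_sin th))]. intros m. unfold Bw, w.
      rewrite Hpw. cbn [c2 a2scale]. match goal with |- ?a = ?b => change (@eq R a b) end. ring.
    + apply abs_bound with th. intros m. unfold Bw, w. rewrite Hpw. cbn [c2 a2scale].
      rewrite Rmult_assoc. apply bnd. apply abs_le1; [apply cs_bound|auto].
  - apply (lim_coord _ _ _ (Hsum c12 ltac:(intros; reflexivity) ltac:(intros; reflexivity))).
    apply (is_series_mult (fa t) (fun m => c12 (Bw w m))); [apply series_exp | | apply abs_exp | ].
    + eapply is_series_ext; [|apply (is_series_scal_r n3 _ _ (series_sin th))]. intros m. unfold Bw, w.
      rewrite Hpw. cbn [c12 a2scale]. match goal with |- ?a = ?b => change (@eq R a b) end. ring.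
    + apply abs_bound with th. intros m. unfold Bw, w. rewrite Hpw. cbn [c12 a2scale].
      rewrite Rmult_assoc. apply bnd. apply abs_le1; [apply cs_bound|auto].
Qed.

Lemma a2mul_assoc p q r : a2mul (a2mul p q) r = a2mul p (a2mul q r). Proof. a2ring. Qed.
Lemma a2mul_one_r p : a2mul p a2one = p. Proof. a2ring. Qed.
Lemma a2mul_one_l p : a2mul a2one p = p. Proof. a2ring. Qed.

Lemma mul_inv_r z : a2normsq z <> 0 -> a2mul z (a2inv z) = a2one.
Proof. intros Hz. apply A2_ext; a2u; field; exact Hz. Qed.

Lemma mul_inv_cancel y z : a2normsq z <> 0 -> a2mul (a2mul y (a2inv z)) z = y.
Proof. intros Hz. apply A2_ext; a2u; field; exact Hz. Qed.

Lemma normsq_zero p : a2normsq p = 0 -> p = a2zero.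
Proof. intros H. unfold a2normsq in H. apply A2_ext; simpl; nra. Qed.

Lemma fixes_iff A x : fixes A x <->
  a2normsq (a2add (a2mul (mc A) x) (md A)) <> 0 /\
  a2mul (a2add (a2mul (ma A) x) (mb A)) (a2inv (a2add (a2mul (mc A) x) (md A))) = x.
Proof.
  unfold fixes, mobius. destruct Req_EM_T as [e|n]; split.
  - discriminate.
  - intros [h _]; contradiction.
  - intros h; injection h; intros; split; assumption.
  - intros [_ h]; rewrite h; reflexivity.
Qed.

Lemma surj u : a2normsq u <> 0 -> exists t th n1 n2 n3, n1*n1+n2*n2+n3*n3 = 1 /\
  u = mkA2 (exp t * cos th) (exp t * (sin th * n1)) (exp t * (sin th * n2)) (exp t * (sin th * n3)).
Proof.
  intros Hu. destruct u as [u0 u1 u2 u3]. unfold a2normsq in Hu; simpl in Hu.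
  set (N := u0*u0+u1*u1+u2*u2+u3*u3) in *.
  assert (HN : 0 < N) by (unfold N in *; nra).
  set (r := sqrt N).
  assert (Hr : 0 < r) by (apply sqrt_lt_R0; exact HN).
  assert (Hr2 : r * r = N) by (apply sqrt_sqrt; lra).
  set (al := u0 / r).
  assert (Hal : -1 <= al <= 1).
  { unfold al. assert (al*al <= 1).
    { unfold al. unfold Rdiv. replace (u0 * / r * (u0 * / r)) with (u0*u0 / (r*r)) by (field; lra).
      rewrite Hr2. apply Rmult_le_reg_r with N; [exact HN|]. unfold Rdiv.
      rewrite Rmult_assoc, Rinv_l by lra. unfold N; nra. }
    fold al. split; nra. }
  set (s := sqrt (1 - al²)).
  assert (Hs2 : s * s = (u1*u1+u2*u2+u3*u3)/N).
  { unfold s. rewrite sqrt_sqrt.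
    - unfold al, Rsqr. rewrite <- Hr2.
      transitivity ((r*r - u0*u0)/(r*r)); [field; lra|].
      replace (r*r - u0*u0) with (u1*u1+u2*u2+u3*u3) by (rewrite Hr2; unfold N; ring).
      reflexivity.
    - unfold Rsqr. nra. }
  assert (Hs0 : 0 <= s) by apply sqrt_pos.
  exists (ln r), (acos al).
  rewrite exp_ln by exact Hr. rewrite cos_acos by exact Hal. rewrite sin_acos by exact Hal. fold s.
  destruct (Req_dec s 0) as [Hs|Hs].
  - rewrite Hs in Hs2. 
    assert (Hv : u1*u1+u2*u2+u3*u3 = 0).
    { apply Rmult_eq_reg_r with (/ N). 2: apply Rinv_neq_0_compat; lra.
      rewrite Rmult_0_l. unfold Rdiv in Hs2. lra. }
    exists 1, 0, 0. split; [ring|]. rewrite Hs. apply A2_ext; simpl.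
    + unfold al. field. lra.
    + ring_simplify. nra.
    + ring_simplify. nra.
    + ring_simplify. nra.
  - exists (u1 / (r*s)), (u2 / (r*s)), (u3/(r*s)). split.
    + replace (u1 / (r * s) * (u1 / (r * s)) + u2 / (r * s) * (u2 / (r * s)) + u3 / (r * s) * (u3 / (r * s)))
        with ((u1*u1+u2*u2+u3*u3) / (r*r) / (s*s)) by (field; split; lra).
      rewrite Hs2, Hr2. field. split; [lra|].
      intros E. apply Hs. assert (s*s = 0) by (rewrite Hs2, E; unfold Rdiv; ring). nra.
    + assert (r <> 0) by lra. apply A2_ext; simpl; unfold al; field; repeat split; assumption.
Qed.

Lemma coords_eq p q : p = q -> c0 p = c0 q /\ c1 p = c1 q /\ c2 p = c2 q /\ c12 p = c12 q.
Proof. intros ->. auto. Qed.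

Lemma forward a b c d (hA : vahlen (mkMat2 a b c d))
  (h1 : fixes (mkMat2 a b c d) (a2real (-1))) (h2 : fixes (mkMat2 a b c d) (a2real 1)) :
  exists x, mkMat2 a b c d = cosh_sinh_mat x.
Proof.
  apply fixes_iff in h1, h2. simpl in h1, h2.
  destruct h1 as [n1 e1]. destruct h2 as [n2 e2].
  apply (f_equal (fun y => a2mul y (a2add (a2mul c (a2real (-1))) d))) in e1.
  apply (f_equal (fun y => a2mul y (a2add (a2mul c (a2real 1)) d))) in e2.
  rewrite mul_inv_cancel in e1, e2 by assumption.
  apply coords_eq in e1, e2. a2u.
  assert (Hd : d = a) by (apply A2_ext; lra).
  assert (Hc : c = b) by (apply A2_ext; lra).
  subst d c.
  assert (Hu : a2normsq (a2add a b) <> 0).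
  { replace (a2add a b) with (a2add (a2mul b (a2real 1)) a) by a2ring. exact n2. }
  destruct (surj _ Hu) as [t [th [m1 [m2 [m3 [Hm Hue]]]]]].
  set (x := mkA2 t (th*m1) (th*m2) (th*m3)).
  assert (Ex : a2exp x = a2add a b) by (unfold x; rewrite exp_formula by exact Hm; symmetry; exact Hue).
  set (y := mkA2 (exp (-t) * cos th) (exp (-t) * (sin th * -m1)) (exp (-t) * (sin th * -m2)) (exp (-t) * (sin th * m3))).
  assert (Ey : a2exp (a2opp (a2star x)) = y).
  { replace (a2opp (a2star x)) with (mkA2 (-t) (th * -m1) (th * -m2) (th*m3)) by (unfold x; a2ring).
    apply exp_formula. lra. }
  assert (Hy : a2mul (a2star (a2add a b)) y = a2one).
  { rewrite Hue. unfold y. rewrite exp_Ropp.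
    assert (HE : exp t <> 0) by (apply Rgt_not_eq, exp_pos).
    assert (Hcs := sin2_cos2 th). unfold Rsqr in Hcs.
    apply A2_ext; a2u.
    - transitivity (exp t * / exp t * (cos th * cos th + sin th * sin th * (m1*m1+m2*m2+m3*m3))).
      + ring.
      + rewrite Hm, Rinv_r by exact HE. lra.
    - field. exact HE.
    - field. exact HE.
    - field. exact HE. }
  assert (Hv : a2mul (a2sub a b) (a2star (a2add a b)) = a2one).
  { destruct hA as [hA1 [hA2 _]]. simpl in hA1, hA2. unfold paravector in hA2.
    apply coords_eq in hA1. a2u. apply A2_ext; a2u; lra. }
  assert (Eab : a2sub a b = y).
  { rewrite <- (a2mul_one_r (a2sub a b)), <- Hy, <- a2mul_assoc, Hv, a2mul_one_l. reflexivity. }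
  exists x. unfold cosh_sinh_mat, a2cosh, a2sinh. rewrite Ex, Ey, <- Eab.
  f_equal; apply A2_ext; a2u; field.
Qed.

Lemma backward a b (hA : vahlen (mkMat2 a b b a)) :
  fixes (mkMat2 a b b a) (a2real (-1)) /\ fixes (mkMat2 a b b a) (a2real 1).
Proof.
  destruct hA as [hA1 _]. simpl in hA1. apply coords_eq in hA1.
  split; apply fixes_iff; simpl.
  - assert (Hn : a2normsq (a2add (a2mul b (a2real (-1))) a) <> 0).
    { intros H0. apply normsq_zero, coords_eq in H0. a2u.
      assert (E : a = b) by (apply A2_ext; lra). subst b. lra. }
    split; [exact Hn|].
    replace (a2add (a2mul a (a2real (-1))) b) with (a2scale (-1) (a2add (a2mul b (a2real (-1))) a)) by a2ring.
    rewrite a2mul_scalel, mul_inv_r by exact Hn. a2ring.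
  - assert (Hn : a2normsq (a2add (a2mul b (a2real 1)) a) <> 0).
    { intros H0. apply normsq_zero, coords_eq in H0. a2u.
      assert (E : a = a2opp b) by (apply A2_ext; a2u; lra). subst a. a2u. lra. }
    split; [exact Hn|].
    replace (a2add (a2mul a (a2real 1)) b) with (a2add (a2mul b (a2real 1)) a) by a2ring.
    rewrite mul_inv_r by exact Hn. a2ring.
Qed.

Theorem proposition3p3 (A : Mat2) (hA : vahlen A) :
  (fixes A (a2real (-1)) /\ fixes A (a2real 1)) <->
  exists x : A2, A = cosh_sinh_mat x \/ mat_opp A = cosh_sinh_mat x.
Proof.
  destruct A as [a b c d]. split.
  - intros [h1 h2]. destruct (forward a b c d hA h1 h2) as [x Hx]. exists x. left. exact Hx.
  - intros [x [Hx|Hx]].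
    + unfold cosh_sinh_mat in Hx. injection Hx. intros -> -> -> ->.
      apply backward. exact hA.
    + pose proof (f_equal ma Hx) as Ha. pose proof (f_equal mb Hx) as Hb.
      pose proof (f_equal mc Hx) as Hc. pose proof (f_equal md Hx) as Hd.
      cbn [ma mb mc md mat_opp cosh_sinh_mat] in Ha, Hb, Hc, Hd.
      rewrite <- Ha in Hd. rewrite <- Hb in Hc.
      assert (E1 : d = a).
      { apply (f_equal a2opp) in Hd. apply A2_ext; apply coords_eq in Hd; a2u; lra. }
      assert (E2 : c = b).
      { apply (f_equal a2opp) in Hc. apply A2_ext; apply coords_eq in Hc; a2u; lra. }
      subst d c. apply backward. exact hA.
Qed.
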